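(* Let $L=2\pi\sqrt{7/3}$ and let $\mathcal A\varphi:=-\varphi'-\varphi'''$ on $D(\mathcal A):=\{\varphi\in H^3(0,L);\ \varphi(0)=\varphi(L)=\varphi'(L)=0\}$, considered on the complex space $L^2(0,L)$. Then \[ \sigma_p(\mathcal A)\cap i\mathbb R=\{\pm iq\},\qquad q=\frac{20}{21\sqrt{21}}, \] and the eigenfunctions of $\mathcal A$ associated with $\lambda=\pm iq$ are exactly $\varphi=C(\varphi_1\mp i\varphi_2)$, $C$ an arbitrary constant, where \[ \varphi_1(x)=\Theta\Big(\cos\tfrac{5x}{\sqrt{21}}-3\cos\tfrac{x}{\sqrt{21}}+2\cos\tfrac{4x}{\sqrt{21}}\Big),\quad \varphi_2(x)=\Theta\Big(-\sin\tfrac{5x}{\sqrt{21}}-3\sin\tfrac{x}{\sqrt{21}}+2\sin\tfrac{4x}{\sqrt{21}}\Big), \] with $\Theta:=\frac{1}{\sqrt{14\pi}}\left(\frac37\right)^{1/4}$.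
   Context: $\sigma_p(\mathcal A)$ denotes the set of eigenvalues of $\mathcal A$. *)

(* Defs.v *)
(* classical real numbers. Complex-valued functions are
   represented by their real and imaginary parts (u, v : R -> R). *)
From Stdlib Require Import Reals.
Open Scope R_scope.

Definition Lc : R := 2 * PI * sqrt (7 / 3).

Definition q : R := 20 / (21 * sqrt 21).

Definition Theta : R := (1 / sqrt (14 * PI)) * Rpower (3 / 7) (1 / 4).

Definition phi1 (x : R) : R :=
  Theta * (cos (5 * x / sqrt 21) - 3 * cos (x / sqrt 21) + 2 * cos (4 * x / sqrt 21)).

Definition phi2 (x : R) : R :=
  Theta * (- sin (5 * x / sqrt 21) - 3 * sin (x / sqrt 21) + 2 * sin (4 * x / sqrt 21)).

Definition has_deriv_on (a b : R) (f f' : R -> R) : Prop :=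
  forall x, a <= x <= b ->
  forall eps, 0 < eps -> exists delta, 0 < delta /\
    forall h, h <> 0 -> Rabs h < delta -> a <= x + h <= b ->
      Rabs ((f (x + h) - f x) / h - f' x) < eps.

(* phi = u + i v lies in D(A) and satisfies A phi = lam phi,
   lam = lr + i li, where A phi = - phi' - phi'''. *)
Definition eigen_eq (lr li : R) (u v : R -> R) : Prop :=
  exists u1 u2 u3 v1 v2 v3 : R -> R,
    has_deriv_on 0 Lc u u1 /\ has_deriv_on 0 Lc u1 u2 /\ has_deriv_on 0 Lc u2 u3 /\
    has_deriv_on 0 Lc v v1 /\ has_deriv_on 0 Lc v1 v2 /\ has_deriv_on 0 Lc v2 v3 /\
    u 0 = 0 /\ v 0 = 0 /\ u Lc = 0 /\ v Lc = 0 /\ u1 Lc = 0 /\ v1 Lc = 0 /\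
    (forall x, 0 <= x <= Lc ->
       - u1 x - u3 x = lr * u x - li * v x /\
       - v1 x - v3 x = lr * v x + li * u x).

Definition is_eigenvalue (lr li : R) : Prop :=
  exists u v : R -> R, eigen_eq lr li u v /\
    exists x, 0 <= x <= Lc /\ (u x <> 0 \/ v x <> 0).

(* Main.v *)
Require Import Defs.
From Stdlib Require Import Reals Lra Lia Psatz ZArith.
From Coquelicot Require Import Coquelicot.
Open Scope R_scope.


Lemma Lc_pos : 0 < Lc.
Proof.
  unfold Lc. apply Rmult_lt_0_compat. pose proof PI_RGT_0. lra.
  apply sqrt_lt_R0. lra.
Qed.

Definition clamp x := Rmax 0 (Rmin Lc x).
Definition cl (f : R -> R) x := f (clamp x).

Lemma clamp_id x : 0 <= x <= Lc -> clamp x = x.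
Proof. intros. unfold clamp, Rmax, Rmin. repeat destruct Rle_dec; lra. Qed.

Lemma clamp_in x : 0 <= clamp x <= Lc.
Proof. pose proof Lc_pos. unfold clamp, Rmax, Rmin. repeat destruct Rle_dec; lra. Qed.

Lemma clamp_lip x y : Rabs (clamp y - clamp x) <= Rabs (y - x).
Proof. pose proof Lc_pos. unfold clamp, Rmax, Rmin. repeat destruct Rle_dec; split_Rabs; lra. Qed.

Definition DD (f f' : R -> R) :=
  (forall x, continuity_pt (cl f) x) /\
  (forall x, 0 < x < Lc -> derivable_pt_lim (cl f) x (f' x)).

Lemma hd_wc f f' : has_deriv_on 0 Lc f f' -> forall z, 0 <= z <= Lc ->
  forall eps, 0 < eps -> exists d, 0 < d /\ forall y, 0 <= y <= Lc -> Rabs (y - z) < d ->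
   Rabs (f y - f z) < eps.
Proof.
  intros H z Hz eps Heps.
  destruct (H z Hz 1 Rlt_0_1) as [d1 [Hd1 Hd]].
  set (K := Rabs (f' z) + 1).
  assert (HK : 0 < K) by (unfold K; pose proof (Rabs_pos (f' z)); lra).
  exists (Rmin d1 (eps / K)). split.
  { apply Rmin_pos; auto. apply Rdiv_lt_0_compat; auto. }
  intros y Hy Hyz.
  destruct (Req_dec y z) as [->|Hne].
  { rewrite Rminus_eq_0, Rabs_R0; auto. }
  assert (Hh : y - z <> 0) by lra.
  assert (Hm1 := Rmin_l d1 (eps / K)). assert (Hm2 := Rmin_r d1 (eps / K)).
  specialize (Hd (y - z) Hh ltac:(lra) ltac:(lra)).
  replace (z + (y - z)) with y in Hd by ring.
  set (Q := (f y - f z) / (y - z)) in *.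
  assert (HE : f y - f z = Q * (y - z)) by (unfold Q; field; auto).
  rewrite HE, Rabs_mult.
  assert (HQ : Rabs Q < K).
  { unfold K. pose proof (Rabs_triang (Q - f' z) (f' z)). replace (Q - f' z + f' z) with Q in H0 by ring. lra. }
  assert (Hyz2 : Rabs (y - z) < eps / K) by lra.
  assert (Rabs (y - z) * K < eps).
  { apply (Rmult_lt_compat_r K) in Hyz2; auto. unfold Rdiv in Hyz2. rewrite Rmult_assoc, Rinv_l in Hyz2; lra. }
  pose proof (Rabs_pos Q). pose proof (Rabs_pos (y - z)). nra.
Qed.

Lemma hd_DD f f' : has_deriv_on 0 Lc f f' -> DD f f'.
Proof.
  intros H. split.
  - intros x. intros eps Heps.
    destruct (hd_wc f f' H (clamp x) (clamp_in x) eps Heps) as [d [Hd Hc]].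
    exists d. split; auto. intros y [_ Hy]. simpl in *. unfold R_dist in *. unfold cl.
    apply Hc. apply clamp_in. pose proof (clamp_lip x y). lra.
  - intros x Hx eps Heps.
    assert (Hx' : 0 <= x <= Lc) by lra.
    destruct (H x Hx' eps Heps) as [d1 [Hd1 Hd]].
    assert (Hp : 0 < Rmin d1 (Rmin x (Lc - x))).
    { apply Rmin_pos; auto. apply Rmin_pos; lra. }
    exists (mkposreal _ Hp). intros h Hh Hlt. simpl in Hlt.
    assert (Hm1 := Rmin_l d1 (Rmin x (Lc - x))). assert (Hm2 := Rmin_r d1 (Rmin x (Lc - x))).
    assert (Hm3 := Rmin_l x (Lc - x)). assert (Hm4 := Rmin_r x (Lc - x)).
    assert (Habs: - Rabs h <= h <= Rabs h) by (split_Rabs; lra).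
    unfold cl. rewrite !clamp_id by lra.
    apply Hd; auto; lra.
Qed.

Lemma smooth_hd f f' : (forall x, derivable_pt_lim f x (f' x)) -> has_deriv_on 0 Lc f f'.
Proof.
  intros H x Hx eps Heps. destruct (H x eps Heps) as [d Hd].
  exists d. split. apply cond_pos. intros h Hh Hlt _. apply Hd; auto.
Qed.

Lemma smooth_DD f f' : (forall x, derivable_pt_lim f x (f' x)) -> DD f f'.
Proof. intros. apply hd_DD, smooth_hd; auto. Qed.

Lemma DD_plus f f' g g' : DD f f' -> DD g g' -> DD (fun x => f x + g x) (fun x => f' x + g' x).
Proof.
  intros [Hf1 Hf2] [Hg1 Hg2]. split.
  - intros x. exact (continuity_pt_plus _ _ _ (Hf1 x) (Hg1 x)).
  - intros x Hx. exact (derivable_pt_lim_plus _ _ _ _ _ (Hf2 x Hx) (Hg2 x Hx)).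
Qed.

Lemma DD_minus f f' g g' : DD f f' -> DD g g' -> DD (fun x => f x - g x) (fun x => f' x - g' x).
Proof.
  intros [Hf1 Hf2] [Hg1 Hg2]. split.
  - intros x. exact (continuity_pt_minus _ _ _ (Hf1 x) (Hg1 x)).
  - intros x Hx. exact (derivable_pt_lim_minus _ _ _ _ _ (Hf2 x Hx) (Hg2 x Hx)).
Qed.

Lemma DD_opp f f' : DD f f' -> DD (fun x => - f x) (fun x => - f' x).
Proof.
  intros [Hf1 Hf2]. split.
  - intros x. exact (continuity_pt_opp _ _ (Hf1 x)).
  - intros x Hx. exact (derivable_pt_lim_opp _ _ _ (Hf2 x Hx)).
Qed.

Lemma DD_mult f f' g g' : DD f f' -> DD g g' ->
  DD (fun x => f x * g x) (fun x => f' x * g x + f x * g' x).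
Proof.
  intros [Hf1 Hf2] [Hg1 Hg2]. split.
  - intros x. exact (continuity_pt_mult _ _ _ (Hf1 x) (Hg1 x)).
  - intros x Hx. pose proof (derivable_pt_lim_mult _ _ _ _ _ (Hf2 x Hx) (Hg2 x Hx)) as H.
    assert (E1 : cl f x = f x) by (unfold cl; rewrite clamp_id; lra).
    assert (E2 : cl g x = g x) by (unfold cl; rewrite clamp_id; lra).
    replace (f' x * g x + f x * g' x) with (f' x * cl g x + cl f x * g' x) by (rewrite E1, E2; ring).
    exact H.
Qed.

Lemma DD_const c : DD (fun _ => c) (fun _ => 0).
Proof.
  split.
  - intros x. apply continuity_pt_const. intros a b. reflexivity.
  - intros x Hx. exact (derivable_pt_lim_const c x).
Qed.

Lemma DD_ext f f1 f2 : DD f f1 -> (forall x, 0 <= x <= Lc -> f1 x = f2 x) -> DD f f2.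
Proof.
  intros [H1 H2] He. split; auto. intros x Hx. rewrite <- He by lra. auto.
Qed.

Lemma DD_mono g g' : DD g g' -> (forall x, 0 <= x <= Lc -> g' x <= 0) ->
  forall x y, 0 <= x <= y -> y <= Lc -> g y <= g x.
Proof.
  intros [H1 H2] Hneg x y Hxy HyL.
  destruct (Req_dec x y) as [->|Hne]; [lra|].
  destruct (MVT_gen (cl g) x y g') as [c [Hc He]].
  - intros z Hz. rewrite Rmin_left in Hz by lra. rewrite Rmax_right in Hz by lra.
    apply is_derive_Reals. apply H2. lra.
  - intros z Hz. apply H1.
  - rewrite Rmin_left in Hc by lra. rewrite Rmax_right in Hc by lra.
    unfold cl in He. rewrite !clamp_id in He by lra.
    assert (g' c <= 0) by (apply Hneg; lra). nra.
Qed.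

Lemma DD_constant g g' : DD g g' -> (forall x, 0 <= x <= Lc -> g' x = 0) -> g Lc = g 0.
Proof.
  intros H Hz. pose proof Lc_pos.
  assert (A1 := DD_mono g g' H ltac:(intros; rewrite Hz; lra) 0 Lc ltac:(lra) ltac:(lra)).
  assert (H' := DD_opp _ _ H).
  assert (A2 := DD_mono _ _ H' ltac:(intros; simpl; rewrite Hz; lra) 0 Lc ltac:(lra) ltac:(lra)).
  simpl in A2. lra.
Qed.


Lemma DD_exp c : DD (fun x => exp (c * x)) (fun x => c * exp (c * x)).
Proof. apply smooth_DD. intros x. apply is_derive_Reals. auto_derive; auto. ring. Qed.
Lemma DD_cos c : DD (fun x => cos (c * x)) (fun x => - c * sin (c * x)).
Proof. apply smooth_DD. intros x. apply is_derive_Reals. auto_derive; auto. ring. Qed.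
Lemma DD_sin c : DD (fun x => sin (c * x)) (fun x => c * cos (c * x)).
Proof. apply smooth_DD. intros x. apply is_derive_Reals. auto_derive; auto. ring. Qed.

Ltac dd := repeat first
  [ eassumption | apply DD_plus | apply DD_minus | apply DD_mult | apply DD_opp
  | apply DD_exp | apply DD_cos | apply DD_sin | apply DD_const ].

Lemma uniq w u u1 u2 u3 v v1 v2 v3 : DD u u1 -> DD u1 u2 -> DD u2 u3 -> DD v v1 -> DD v1 v2 -> DD v2 v3 ->
 (forall x, 0<=x<=Lc -> - u1 x - u3 x = 0 * u x - w * v x /\ - v1 x - v3 x = 0 * v x + w * u x) ->
 u 0 = 0 -> u1 0 = 0 -> u2 0 = 0 -> v 0 = 0 -> v1 0 = 0 -> v2 0 = 0 ->
 forall x, 0<=x<=Lc -> u x = 0 /\ v x = 0.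
Proof.
  intros Du Du1 Du2 Dv Dv1 Dv2 Hode H1 H2 H3 H4 H5 H6 x Hx.
  set (K := 2 + w * w).
  set (E := fun x => u x * u x + u1 x * u1 x + u2 x * u2 x + v x * v x + v1 x * v1 x + v2 x * v2 x).
  set (E' := fun x => 2 * (u x * u1 x + u1 x * u2 x + u2 x * u3 x + v x * v1 x + v1 x * v2 x + v2 x * v3 x)).
  assert (Dg : DD (fun x => exp (- K * x) * E x) (fun x => exp (- K * x) * (E' x - K * E x))).
  { eapply DD_ext. unfold E. dd. intros y _. cbv beta. unfold E, E'. ring. }
  pose proof (DD_mono _ _ Dg) as M.
  assert (Mx : forall y, 0 <= y <= Lc -> exp (- K * y) * (E' y - K * E y) <= 0).
  { intros y Hy. destruct (Hode y Hy) as [E1 E2]. unfold E, E'.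
    replace (u3 y) with (- u1 y + w * v y) by lra.
    replace (v3 y) with (- v1 y - w * u y) by lra.
    pose proof (exp_pos (- K * y)).
    assert (2 * (u y * u1 y + v y * v1 y + w * (u2 y * v y - v2 y * u y)) <=
            K * (u y * u y + u1 y * u1 y + u2 y * u2 y + v y * v y + v1 y * v1 y + v2 y * v2 y)).
    { unfold K.
      assert (Hid : (2 + w * w) * (u y * u y + u1 y * u1 y + u2 y * u2 y + v y * v y + v1 y * v1 y + v2 y * v2 y)
        - 2 * (u y * u1 y + v y * v1 y + w * (u2 y * v y - v2 y * u y)) =
        (u y - u1 y) * (u y - u1 y) + (v y - v1 y) * (v y - v1 y) + (w * u2 y - v y) * (w * u2 y - v y)
        + (w * v2 y + u y) * (w * v2 y + u y) + (w * u y) * (w * u y) + (1 + w * w) * (u1 y * u1 y)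
        + 2 * (u2 y * u2 y) + (w * v y) * (w * v y) + (1 + w * w) * (v1 y * v1 y) + 2 * (v2 y * v2 y)) by ring.
      assert (0 <= w * w) by nra.
      assert (0 <= (1 + w * w) * (u1 y * u1 y)) by (apply Rmult_le_pos; nra).
      assert (0 <= (1 + w * w) * (v1 y * v1 y)) by (apply Rmult_le_pos; nra).
      pose proof (Rle_0_sqr (u y - u1 y)). pose proof (Rle_0_sqr (v y - v1 y)).
      pose proof (Rle_0_sqr (w * u2 y - v y)). pose proof (Rle_0_sqr (w * v2 y + u y)).
      pose proof (Rle_0_sqr (w * u y)). pose proof (Rle_0_sqr (w * v y)).
      pose proof (Rle_0_sqr (u2 y)). pose proof (Rle_0_sqr (v2 y)).
      unfold Rsqr in *. lra. }
    apply Rmult_le_0_l. lra. 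
    match goal with |- ?a <= 0 => set (LHS := a) end.
    match goal with H : 2 * ?p <= ?r |- _ => assert (LHS = 2 * p - r) by (unfold LHS, K; ring) end.
    lra. }
  specialize (M Mx 0 x ltac:(lra) ltac:(lra)).
  assert (E0 : E 0 = 0) by (unfold E; rewrite H1, H2, H3, H4, H5, H6; ring).
  cbv beta in M. rewrite E0, Rmult_0_r in M.
  pose proof (exp_pos (- K * x)).
  assert (E x <= 0).
  { destruct (Rle_dec (E x) 0); auto. exfalso. assert (0 < exp (- K * x) * E x) by (apply Rmult_lt_0_compat; lra). lra. }
  unfold E in H0.
  pose proof (Rle_0_sqr (u x)). pose proof (Rle_0_sqr (v x)).
  pose proof (Rle_0_sqr (u1 x)). pose proof (Rle_0_sqr (v1 x)).
  pose proof (Rle_0_sqr (u2 x)). pose proof (Rle_0_sqr (v2 x)).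
  unfold Rsqr in *. split; nra.
Qed.


Lemma Qlem (w : R) (u u1 u2 u3 v v1 v2 v3 : R -> R)
  (Du : DD u u1) (Du1 : DD u1 u2) (Du2 : DD u2 u3) (Dv : DD v v1) (Dv1 : DD v1 v2) (Dv2 : DD v2 v3)
  (Hode : forall x, 0<=x<=Lc -> - u1 x - u3 x = 0 * u x - w * v x /\ - v1 x - v3 x = 0 * v x + w * u x)
  (Hu0 : u 0 = 0) (Hv0 : v 0 = 0) (HuL : u Lc = 0) (HvL : v Lc = 0) (Hu1L : u1 Lc = 0) (Hv1L : v1 Lc = 0) : u1 0 = 0 /\ v1 0 = 0.
Proof.
  eassert (DQ : DD (fun x => u x * u x + v x * v x + 2 * (u2 x * u x + v2 x * v x) - u1 x * u1 x - v1 x * v1 x) _) by dd.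
  pose proof (DD_constant _ _ DQ) as HC.
  cbv beta in HC. rewrite Hu0, Hv0, HuL, HvL, Hu1L, Hv1L in HC.
  assert (HZ : u1 0 * u1 0 + v1 0 * v1 0 = 0).
  { enough (HH : 0 * 0 + 0 * 0 + 2 * (u2 Lc * 0 + v2 Lc * 0) - 0 * 0 - 0 * 0 =
      0 * 0 + 0 * 0 + 2 * (u2 0 * 0 + v2 0 * 0) - u1 0 * u1 0 - v1 0 * v1 0) by lra.
    apply HC. intros y Hy. destruct (Hode y Hy) as [E1 E2].
    replace (u3 y) with (- u1 y + w * v y) by lra.
    replace (v3 y) with (- v1 y - w * u y) by lra. ring. }
  pose proof (Rle_0_sqr (u1 0)). pose proof (Rle_0_sqr (v1 0)). unfold Rsqr in *. split; nra.
Qed.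

Lemma Hlem (w : R) (u u1 u2 u3 v v1 v2 v3 : R -> R)
  (Du : DD u u1) (Du1 : DD u1 u2) (Du2 : DD u2 u3) (Dv : DD v v1) (Dv1 : DD v1 v2) (Dv2 : DD v2 v3)
  (Hode : forall x, 0<=x<=Lc -> - u1 x - u3 x = 0 * u x - w * v x /\ - v1 x - v3 x = 0 * v x + w * u x)
  (Hu0 : u 0 = 0) (Hv0 : v 0 = 0) (HuL : u Lc = 0) (HvL : v Lc = 0) (Hu1L : u1 Lc = 0) (Hv1L : v1 Lc = 0) a b : a * a * a - 3 * a * b * b + a = 0 -> 3 * a * a * b - b * b * b + b + w = 0 ->
  u1 0 = 0 -> v1 0 = 0 ->
  exp (- a * Lc) * (cos (b * Lc) * u2 Lc + sin (b * Lc) * v2 Lc) = u2 0 /\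
  exp (- a * Lc) * (cos (b * Lc) * v2 Lc - sin (b * Lc) * u2 Lc) = v2 0.
Proof.
  intros Er Ei Hu10 Hv10.
  set (GR := fun x => u2 x + a * u1 x - b * v1 x + (a * a - b * b + 1) * u x - 2 * a * b * v x).
  set (GI := fun x => v2 x + a * v1 x + b * u1 x + (a * a - b * b + 1) * v x + 2 * a * b * u x).
  eassert (DR : DD (fun x => exp (- a * x) * (cos (b * x) * GR x + sin (b * x) * GI x)) _) by (unfold GR, GI; dd).
  eassert (DI : DD (fun x => exp (- a * x) * (cos (b * x) * GI x - sin (b * x) * GR x)) _) by (unfold GR, GI; dd).
  pose proof (DD_constant _ _ DR) as HR. pose proof (DD_constant _ _ DI) as HI.
  cbv beta in HR, HI.
  assert (G0R : GR 0 = u2 0) by (unfold GR; rewrite Hu0, Hv0, Hu10, Hv10; ring).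
  assert (G0I : GI 0 = v2 0) by (unfold GI; rewrite Hu0, Hv0, Hu10, Hv10; ring).
  assert (GLR : GR Lc = u2 Lc) by (unfold GR; rewrite HuL, HvL, Hu1L, Hv1L; ring).
  assert (GLI : GI Lc = v2 Lc) by (unfold GI; rewrite HuL, HvL, Hu1L, Hv1L; ring).
  rewrite G0R, G0I, GLR, GLI in *.
  rewrite !Rmult_0_r, cos_0, sin_0, exp_0 in HR, HI.
  split.
  - rewrite HR. ring. intros y Hy. destruct (Hode y Hy) as [E1 E2]. unfold GR, GI.
    replace (u3 y) with (- u1 y + w * v y) by lra.
    replace (v3 y) with (- v1 y - w * u y) by lra.
    transitivity (- exp (- a * y) * ((cos (b * y) * u y + sin (b * y) * v y) * (a * a * a - 3 * a * b * b + a)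
       - (cos (b * y) * v y - sin (b * y) * u y) * (3 * a * a * b - b * b * b + b + w))).
    ring. rewrite Er, Ei. ring.
  - rewrite HI. ring. intros y Hy. destruct (Hode y Hy) as [E1 E2]. unfold GR, GI.
    replace (u3 y) with (- u1 y + w * v y) by lra.
    replace (v3 y) with (- v1 y - w * u y) by lra.
    transitivity (- exp (- a * y) * ((cos (b * y) * u y + sin (b * y) * v y) * (3 * a * a * b - b * b * b + b + w)
       + (cos (b * y) * v y - sin (b * y) * u y) * (a * a * a - 3 * a * b * b + a))).
    ring. rewrite Er, Ei. ring.
Qed.


Definition r := sqrt 21.
Definition t := sqrt (7 / 3).

Lemma r_pos : 0 < r.
Proof. unfold r. apply sqrt_lt_R0. lra. Qed.
Lemma r_sq : r * r = 21.
Proof. unfold r. apply sqrt_sqrt. lra. Qed.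
Lemma t_pos : 0 < t.
Proof. unfold t. apply sqrt_lt_R0. lra. Qed.
Lemma t_sq : t * t = 7 / 3.
Proof. unfold t. apply sqrt_sqrt. lra. Qed.
Lemma r_t : r = 3 * t.
Proof. unfold r. apply sqrt_lem_1. lra. pose proof t_pos; lra.
  replace (3 * t * (3 * t)) with (9 * (t * t)) by ring. rewrite t_sq. field. Qed.
Lemma Lc_t : Lc = 2 * PI * t.
Proof. reflexivity. Qed.
Lemma q_r : q = 20 / (r * r * r).
Proof. unfold q. rewrite <- r_sq at 1. fold r. reflexivity. Qed.
Lemma Lc_r : Lc / r = 2 * PI / 3.
Proof. rewrite Lc_t, r_t. field. pose proof t_pos. lra. Qed.

Lemma Theta_pos : 0 < Theta.
Proof. unfold Theta. apply Rmult_lt_0_compat.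
  - apply Rdiv_lt_0_compat. lra. apply sqrt_lt_R0. pose proof PI_RGT_0. lra.
  - unfold Rpower. apply exp_pos.
Qed.

Definition p1d1 x := Theta * (-(5 / r) * sin (5 * x / r) + 3 * (1 / r) * sin (x / r) - 2 * (4 / r) * sin (4 * x / r)).
Definition p1d2 x := Theta * (-(5 / r) * (5 / r) * cos (5 * x / r) + 3 * (1 / r) * (1 / r) * cos (x / r)
   - 2 * (4 / r) * (4 / r) * cos (4 * x / r)).
Definition p1d3 x := Theta * ((5 / r) * (5 / r) * (5 / r) * sin (5 * x / r) - 3 * (1 / r) * (1 / r) * (1 / r) * sin (x / r)
   + 2 * (4 / r) * (4 / r) * (4 / r) * sin (4 * x / r)).
Definition p2d1 x := Theta * (-(5 / r) * cos (5 * x / r) - 3 * (1 / r) * cos (x / r) + 2 * (4 / r) * cos (4 * x / r)).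
Definition p2d2 x := Theta * ((5 / r) * (5 / r) * sin (5 * x / r) + 3 * (1 / r) * (1 / r) * sin (x / r)
   - 2 * (4 / r) * (4 / r) * sin (4 * x / r)).
Definition p2d3 x := Theta * ((5 / r) * (5 / r) * (5 / r) * cos (5 * x / r) + 3 * (1 / r) * (1 / r) * (1 / r) * cos (x / r)
   - 2 * (4 / r) * (4 / r) * (4 / r) * cos (4 * x / r)).

Ltac dsolve := intros x; apply is_derive_Reals;
  unfold phi1, phi2, p1d1, p1d2, p1d3, p2d1, p2d2, p2d3; fold r; auto_derive; auto;
  unfold Rdiv; field; pose proof r_pos; lra.




Lemma d_p1 : forall x, derivable_pt_lim phi1 x (p1d1 x). Proof. dsolve. Qed.
Lemma d_p1d1 : forall x, derivable_pt_lim p1d1 x (p1d2 x). Proof. dsolve. Qed.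
Lemma d_p1d2 : forall x, derivable_pt_lim p1d2 x (p1d3 x). Proof. dsolve. Qed.
Lemma d_p2 : forall x, derivable_pt_lim phi2 x (p2d1 x). Proof. dsolve. Qed.
Lemma d_p2d1 : forall x, derivable_pt_lim p2d1 x (p2d2 x). Proof. dsolve. Qed.
Lemma d_p2d2 : forall x, derivable_pt_lim p2d2 x (p2d3 x). Proof. dsolve. Qed.

Lemma ode1 x : p1d1 x + p1d3 x = - q * phi2 x.
Proof. rewrite q_r. unfold p1d1, p1d3, phi2. fold r.
  set (a := sin (5 * x / r)). set (b := sin (x / r)). set (c := sin (4 * x / r)).
  apply Rminus_diag_uniq.
  transitivity (Theta * (r * r - 21) * (-5 * a + 3 * b - 8 * c) / (r * r * r)).
  field. pose proof r_pos; lra. rewrite r_sq. field. pose proof r_pos; lra.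
Qed.

Lemma ode2 x : p2d1 x + p2d3 x = q * phi1 x.
Proof. rewrite q_r. unfold p2d1, p2d3, phi1. fold r.
  set (a := cos (5 * x / r)). set (b := cos (x / r)). set (c := cos (4 * x / r)).
  apply Rminus_diag_uniq.
  transitivity (Theta * (r * r - 21) * (-5 * a - 3 * b + 8 * c) / (r * r * r)).
  field. pose proof r_pos; lra. rewrite r_sq. field. pose proof r_pos; lra.
Qed.

Lemma val0 : phi1 0 = 0 /\ phi2 0 = 0 /\ p1d1 0 = 0 /\ p2d1 0 = 0 /\ p2d2 0 = 0 /\
  p1d2 0 = - 54 / 21 * Theta.
Proof.
  unfold phi1, phi2, p1d1, p2d1, p2d2, p1d2. fold r.
  replace (5 * 0 / r) with 0 by (field; pose proof r_pos; lra).
  replace (4 * 0 / r) with 0 by (field; pose proof r_pos; lra).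
  replace (0 / r) with 0 by (field; pose proof r_pos; lra).
  rewrite cos_0, sin_0. repeat split; try ring; try (field; pose proof r_pos; lra).
  replace (- (5 / r) * (5 / r) * 1 + 3 * (1 / r) * (1 / r) * 1 - 2 * (4 / r) * (4 / r) * 1) with (-54 / (r * r))
   by (field; pose proof r_pos; lra).
  rewrite r_sq. field.
Qed.

Lemma valL : phi1 Lc = 0 /\ phi2 Lc = 0 /\ p1d1 Lc = 0 /\ p2d1 Lc = 0.
Proof.
  unfold phi1, phi2, p1d1, p2d1. fold r.
  set (th := 2 * PI / 3).
  assert (E1 : Lc / r = th) by (apply Lc_r).
  assert (E5 : 5 * Lc / r = - th + 2 * INR 2 * PI) by (unfold Rdiv in *; simpl INR; unfold th; rewrite Rmult_assoc, E1; unfold th; field).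
  assert (E4 : 4 * Lc / r = th + 2 * INR 1 * PI) by (unfold Rdiv in *; simpl INR; rewrite Rmult_assoc, E1; unfold th; field).
  rewrite E1, E5, E4, !cos_period, !sin_period, cos_neg, sin_neg.
  repeat split; field; pose proof r_pos; lra.
Qed.

Lemma Lc_eq : Lc = 2 * PI / 3 * r.
Proof. rewrite <- Lc_r. field. pose proof r_pos; lra. Qed.

Lemma valmid : phi1 (Lc / 2) = - 2 * Theta.
Proof.
  unfold phi1. fold r. rewrite Lc_eq.
  replace (2 * PI / 3 * r / 2 / r) with (PI / 3) by (field; pose proof r_pos; lra).
  replace (5 * (2 * PI / 3 * r / 2) / r) with (- (PI / 3) + 2 * INR 1 * PI) by (simpl INR; field; pose proof r_pos; lra).
  replace (4 * (2 * PI / 3 * r / 2) / r) with (PI / 3 + PI) by (field; pose proof r_pos; lra).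
  rewrite cos_period, cos_neg, neg_cos, cos_PI3. field.
Qed.


Lemma zcases (S d : Z) : (3 * d * d + S * S = 28)%Z ->
  (S * (S * S - 21) = 20 \/ S * (S * S - 21) = -20)%Z.
Proof.
  intros H.
  assert (HS : (-5 <= S <= 5)%Z) by nia.
  assert (Hd : (-3 <= d <= 3)%Z) by nia.
  assert (S = -5 \/ S = -4 \/ S = -3 \/ S = -2 \/ S = -1 \/ S = 0 \/ S = 1 \/ S = 2 \/ S = 3 \/ S = 4 \/ S = 5)%Z as CS by lia.
  assert (d = -3 \/ d = -2 \/ d = -1 \/ d = 0 \/ d = 1 \/ d = 2 \/ d = 3)%Z as CD by lia.
  repeat destruct CS as [->|CS]; repeat destruct CD as [->|CD]; subst; lia.
Qed.

Lemma cos_one z : cos z = 1 -> exists k, z = IZR k * (2 * PI).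
Proof.
  intros H. replace z with (2 * (z / 2)) in H by field.
  rewrite cos_2a_sin in H.
  assert (sin (z / 2) = 0) by nra.
  destruct (sin_eq_0_0 _ H0) as [k Hk]. exists k. lra.
Qed.

Lemma rot c s X Y : c * c + s * s = 1 ->
  (c * X + s * Y) * (c * X + s * Y) + (c * Y - s * X) * (c * Y - s * X) = X * X + Y * Y.
Proof. intros H. transitivity ((c * c + s * s) * (X * X + Y * Y)). ring. rewrite H; ring. Qed.

Lemma cs1 z : cos z * cos z + sin z * sin z = 1.
Proof. pose proof (sin2_cos2 z). unfold Rsqr in H. lra. Qed.

Lemma part1_dir w : is_eigenvalue 0 w -> w = q \/ w = - q.
Proof.
  intros [u [v [[u1 [u2 [u3 [v1 [v2 [v3 [Hu [Hu1 [Hu2 [Hv [Hv1 [Hv2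
     [Hu0 [Hv0 [HuL [HvL [Hu1L [Hv1L Hode]]]]]]]]]]]]]]]]]] [x0 [Hx0 Hnz]]]]].
  apply hd_DD in Hu, Hu1, Hu2, Hv, Hv1, Hv2.
  destruct (Qlem w u u1 u2 u3 v v1 v2 v3 Hu Hu1 Hu2 Hv Hv1 Hv2 Hode Hu0 Hv0 HuL HvL Hu1L Hv1L) as [Hu10 Hv10].
  set (P := u2 0). set (R0 := v2 0). set (X := u2 Lc). set (Y := v2 Lc).
  assert (HPR : 0 < P * P + R0 * R0).
  { destruct (Req_dec P 0) as [HP|HP]; [destruct (Req_dec R0 0) as [HR|HR]|].
    - exfalso. destruct (uniq w u u1 u2 u3 v v1 v2 v3 Hu Hu1 Hu2 Hv Hv1 Hv2 Hode Hu0 Hu10 HP Hv0 Hv10 HR x0 Hx0).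
      tauto.
    - assert (0 < R0 * R0) by nra. nra.
    - assert (0 < P * P) by nra. nra. }
  pose proof (Hlem w u u1 u2 u3 v v1 v2 v3 Hu Hu1 Hu2 Hv Hv1 Hv2 Hode Hu0 Hv0 HuL HvL Hu1L Hv1L) as HL.
  set (M := Rabs w + 2).
  assert (HM : 2 <= M /\ - M <= w <= M) by (unfold M; split_Rabs; lra).
  destruct (IVT (fun k => k * k * k - k - w) (- M) M) as [k0 [_ Hk0]].
  { reg. }
  { lra. }
  { nra. }
  { nra. }
  cbv beta in Hk0.
  destruct (HL 0 k0 ltac:(ring) ltac:(lra) Hu10 Hv10) as [A1 A2].
  rewrite Ropp_0, Rmult_0_l, exp_0, Rmult_1_l in A1, A2.
  fold X Y P R0 in A1, A2.
  assert (HXY : X * X + Y * Y = P * P + R0 * R0).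
  { rewrite <- A1, <- A2. symmetry. apply rot. apply cs1. }
  destruct (Rlt_le_dec (4 - 3 * k0 * k0) 0) as [Dn|Dp].
  - exfalso.
    set (a := sqrt (3 * k0 * k0 - 4) / 2).
    assert (Ha2 : a * a = (3 * k0 * k0 - 4) / 4).
    { unfold a. replace (sqrt (3 * k0 * k0 - 4) / 2 * (sqrt (3 * k0 * k0 - 4) / 2)) with
        (sqrt (3 * k0 * k0 - 4) * sqrt (3 * k0 * k0 - 4) / 4) by field.
      rewrite sqrt_sqrt by lra. reflexivity. }
    assert (Hapos : 0 < a) by (unfold a; apply Rdiv_lt_0_compat; [apply sqrt_lt_R0; lra | lra]).
    destruct (HL a (- k0 / 2)) as [B1 B2].
    { replace (a * a * a - 3 * a * (- k0 / 2) * (- k0 / 2) + a) with (a * (a * a - 3 * (k0 * k0) / 4 + 1)) by field.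
      rewrite Ha2. field. }
    { replace (3 * a * a * (- k0 / 2) - (- k0 / 2) * (- k0 / 2) * (- k0 / 2) + (- k0 / 2) + w)
        with (3 * (a * a) * (- k0 / 2) + k0 * k0 * k0 / 8 - k0 / 2 + w) by field.
      rewrite Ha2. transitivity (- (k0 * k0 * k0 - k0 - w)). field. rewrite Hk0. ring. }
    { auto. } { auto. }
    fold X Y P R0 in B1, B2.
    set (e := exp (- a * Lc)) in *.
    assert (He : 0 < e < 1).
    { split. apply exp_pos. rewrite <- exp_0. apply exp_increasing. pose proof Lc_pos. nra. }
    assert (e * e * (X * X + Y * Y) = P * P + R0 * R0).
    { rewrite <- B1, <- B2.
      transitivity (e * e * ((cos (- k0 / 2 * Lc) * X + sin (- k0 / 2 * Lc) * Y) * (cos (- k0 / 2 * Lc) * X + sin (- k0 / 2 * Lc) * Y)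
         + (cos (- k0 / 2 * Lc) * Y - sin (- k0 / 2 * Lc) * X) * (cos (- k0 / 2 * Lc) * Y - sin (- k0 / 2 * Lc) * X))).
      rewrite rot by apply cs1. ring. ring. }
    rewrite HXY in H. assert (e * e < 1) by nra. nra.
  - set (rho := sqrt (4 - 3 * k0 * k0)).
    assert (Hrho : rho * rho = 4 - 3 * k0 * k0) by (unfold rho; apply sqrt_sqrt; lra).
    set (kp := (- k0 + rho) / 2). set (km := (- k0 - rho) / 2).
    assert (Hw : w = k0 * k0 * k0 - k0) by lra.
    assert (Rp : 3 * 0 * 0 * kp - kp * kp * kp + kp + w = 0).
    { assert (Hq : kp * kp + k0 * kp + k0 * k0 - 1 = 0).
      { transitivity ((rho * rho - (4 - 3 * k0 * k0)) / 4). unfold kp; field. rewrite Hrho; field. }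
      transitivity (- ((kp - k0) * (kp * kp + k0 * kp + k0 * k0 - 1))). rewrite Hw; ring. rewrite Hq; ring. }
    assert (Rm : 3 * 0 * 0 * km - km * km * km + km + w = 0).
    { assert (Hq : km * km + k0 * km + k0 * k0 - 1 = 0).
      { transitivity ((rho * rho - (4 - 3 * k0 * k0)) / 4). unfold km; field. rewrite Hrho; field. }
      transitivity (- ((km - k0) * (km * km + k0 * km + k0 * k0 - 1))). rewrite Hw; ring. rewrite Hq; ring. }
    destruct (HL 0 kp ltac:(ring) Rp Hu10 Hv10) as [C1 C2].
    destruct (HL 0 km ltac:(ring) Rm Hu10 Hv10) as [D1 D2].
    rewrite Ropp_0, Rmult_0_l, exp_0, Rmult_1_l in C1, C2, D1, D2.
    fold X Y P R0 in C1, C2, D1, D2.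
    assert (Key : forall kk, cos (kk * Lc) * X + sin (kk * Lc) * Y = P -> cos (kk * Lc) * Y - sin (kk * Lc) * X = R0 ->
       exists m, (k0 - kk) * t = IZR m).
    { intros kk K1 K2.
      assert (Hc : cos (k0 * Lc - kk * Lc) = 1).
      { rewrite cos_minus.
        assert (P * P + R0 * R0 = (cos (k0 * Lc) * cos (kk * Lc) + sin (k0 * Lc) * sin (kk * Lc)) * (X * X + Y * Y)).
        { rewrite <- A1 at 1. rewrite <- K1. rewrite <- A2 at 1. rewrite <- K2. ring. }
        rewrite HXY in H. nra. }
      destruct (cos_one _ Hc) as [m Hm]. exists m.
      rewrite Lc_t in Hm. pose proof PI_RGT_0.
      apply (Rmult_eq_reg_l (2 * PI)). transitivity (IZR m * (2 * PI)). rewrite <- Hm. ring. ring. lra. }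
    destruct (Key kp C1 C2) as [m Hm]. destruct (Key km D1 D2) as [n Hn].
    pose proof t_pos as Ht.
    assert (E1 : IZR n - IZR m = rho * t) by (rewrite <- Hm, <- Hn; unfold kp, km; field).
    assert (E2 : IZR m + IZR n = 3 * k0 * t) by (rewrite <- Hm, <- Hn; unfold kp, km; field).
    assert (E3 : 3 * (IZR n - IZR m) * (IZR n - IZR m) + (IZR m + IZR n) * (IZR m + IZR n) = 28).
    { rewrite E1, E2. replace (3 * (rho * t) * (rho * t) + 3 * k0 * t * (3 * k0 * t)) with
        (t * t * (3 * (rho * rho) + 9 * (k0 * k0))) by ring. rewrite t_sq, Hrho. field. }
    assert (EZ : (3 * (n - m) * (n - m) + (m + n) * (m + n) = 28)%Z).
    { apply eq_IZR. rewrite plus_IZR, !mult_IZR, minus_IZR, plus_IZR. exact E3. }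
    destruct (zcases (m + n) (n - m) EZ) as [Z1|Z1]; apply (f_equal IZR) in Z1;
      rewrite mult_IZR, minus_IZR, mult_IZR, plus_IZR in Z1.
    all: assert (Hk : k0 = (IZR m + IZR n) / (3 * t)) by (rewrite E2; field; lra).
    all: assert (Hw2 : w = (IZR m + IZR n) * ((IZR m + IZR n) * (IZR m + IZR n) - 9 * (t * t)) / (27 * (t * t * t)))
           by (rewrite Hw, Hk; field; lra).
    all: replace (t * t * t) with (t * (7 / 3)) in Hw2 by (rewrite <- t_sq; ring).
    all: rewrite t_sq in Hw2.
    all: unfold q; fold r; rewrite r_t.
    + left. rewrite Hw2. replace (9 * (7 / 3)) with 21 by field. rewrite Z1. field. lra.
    + right. rewrite Hw2. replace (9 * (7 / 3)) with 21 by field. rewrite Z1. field. lra.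
Qed.


Lemma hd_ext f g g' : (forall x, 0 <= x <= Lc -> f x = g x) -> has_deriv_on 0 Lc g g' -> has_deriv_on 0 Lc f g'.
Proof.
  intros He H x Hx eps Heps. destruct (H x Hx eps Heps) as [d [Hd Hh]].
  exists d. split; auto. intros h H1 H2 H3. rewrite !He by lra. auto.
Qed.

Lemma lin_der f f' g g' a b : (forall x, derivable_pt_lim f x (f' x)) -> (forall x, derivable_pt_lim g x (g' x)) ->
  forall x, derivable_pt_lim (fun y => a * f y + b * g y) x (a * f' x + b * g' x).
Proof.
  intros Hf Hg x.
  exact (derivable_pt_lim_plus _ _ _ _ _ (derivable_pt_lim_scal _ a _ _ (Hf x)) (derivable_pt_lim_scal _ b _ _ (Hg x))).
Qed.

Lemma part2_back s : (s = 1 \/ s = -1) -> forall u v a b,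
  (forall x, 0 <= x <= Lc -> u x = a * phi1 x + s * b * phi2 x /\ v x = b * phi1 x - s * a * phi2 x) ->
  eigen_eq 0 (s * q) u v.
Proof.
  intros Hs u v a b H.
  assert (Hs2 : s * s = 1) by (destruct Hs; subst; ring).
  exists (fun x => a * p1d1 x + (s * b) * p2d1 x), (fun x => a * p1d2 x + (s * b) * p2d2 x),
         (fun x => a * p1d3 x + (s * b) * p2d3 x),
         (fun x => b * p1d1 x + (- (s * a)) * p2d1 x), (fun x => b * p1d2 x + (- (s * a)) * p2d2 x),
         (fun x => b * p1d3 x + (- (s * a)) * p2d3 x).
  pose proof val0 as [V1 [V2 [V3 [V4 [V5 V6]]]]].
  pose proof valL as [W1 [W2 [W3 W4]]].
  pose proof Lc_pos.
  repeat split.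
  - eapply hd_ext. 2: apply smooth_hd, lin_der; [apply d_p1 | apply d_p2].
    intros x Hx. apply H; auto.
  - apply smooth_hd, lin_der; [apply d_p1d1 | apply d_p2d1].
  - apply smooth_hd, lin_der; [apply d_p1d2 | apply d_p2d2].
  - eapply hd_ext. 2: apply smooth_hd, lin_der; [apply d_p1 | apply d_p2].
    intros x Hx. cbv beta. rewrite (proj2 (H x Hx)). ring.
  - apply smooth_hd, lin_der; [apply d_p1d1 | apply d_p2d1].
  - apply smooth_hd, lin_der; [apply d_p1d2 | apply d_p2d2].
  - rewrite (proj1 (H 0 ltac:(lra))), V1, V2. ring.
  - rewrite (proj2 (H 0 ltac:(lra))), V1, V2. ring.
  - rewrite (proj1 (H Lc ltac:(lra))), W1, W2. ring.
  - rewrite (proj2 (H Lc ltac:(lra))), W1, W2. ring.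
  - cbv beta. rewrite W3, W4. ring.
  - cbv beta. rewrite W3, W4. ring.
  - assert (Hx : 0 <= x <= Lc) by assumption. rewrite (proj2 (H x Hx)).
    replace (p1d3 x) with (- q * phi2 x - p1d1 x) by (rewrite <- ode1; ring).
    replace (p2d3 x) with (q * phi1 x - p2d1 x) by (rewrite <- ode2; ring).
    apply Rminus_diag_uniq. transitivity ((1 - s * s) * (q * a * phi2 x)). ring. rewrite Hs2. ring.
  - assert (Hx : 0 <= x <= Lc) by assumption. rewrite (proj1 (H x Hx)).
    replace (p1d3 x) with (- q * phi2 x - p1d1 x) by (rewrite <- ode1; ring).
    replace (p2d3 x) with (q * phi1 x - p2d1 x) by (rewrite <- ode2; ring).
    apply Rminus_diag_uniq. transitivity ((1 - s * s) * (q * b * phi2 x)). ring. rewrite Hs2. ring.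
Qed.

Lemma part2_fwd s : (s = 1 \/ s = -1) -> forall u v, eigen_eq 0 (s * q) u v ->
  exists a b : R, forall x, 0 <= x <= Lc ->
         u x = a * phi1 x + s * b * phi2 x /\ v x = b * phi1 x - s * a * phi2 x.
Proof.
  intros Hs u v [u1 [u2 [u3 [v1 [v2 [v3 [Hu [Hu1 [Hu2 [Hv [Hv1 [Hv2
     [Hu0 [Hv0 [HuL [HvL [Hu1L [Hv1L Hode]]]]]]]]]]]]]]]]]].
  apply hd_DD in Hu, Hu1, Hu2, Hv, Hv1, Hv2.
  set (w := s * q) in *.
  destruct (Qlem w u u1 u2 u3 v v1 v2 v3 Hu Hu1 Hu2 Hv Hv1 Hv2 Hode Hu0 Hv0 HuL HvL Hu1L Hv1L) as [Hu10 Hv10].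
  assert (Hs2 : s * s = 1) by (destruct Hs; subst; ring).
  pose proof val0 as [V1 [V2 [V3 [V4 [V5 V6]]]]].
  pose proof Theta_pos as HT.
  set (c := - 54 / 21 * Theta) in *.
  assert (Hc : c <> 0) by (unfold c; lra).
  set (a := u2 0 / c). set (b := v2 0 / c).
  exists a, b.
  pose proof (smooth_DD _ _ d_p1) as P0. pose proof (smooth_DD _ _ d_p1d1) as P1.
  pose proof (smooth_DD _ _ d_p1d2) as P2. pose proof (smooth_DD _ _ d_p2) as Q0.
  pose proof (smooth_DD _ _ d_p2d1) as Q1. pose proof (smooth_DD _ _ d_p2d2) as Q2.
  assert (G1 : DD (fun x => u x - (a * phi1 x + s * b * phi2 x)) (fun x => u1 x - (a * p1d1 x + s * b * p2d1 x)))
    by (eapply DD_ext; [dd | intros; cbv beta; ring]).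
  assert (G2 : DD (fun x => u1 x - (a * p1d1 x + s * b * p2d1 x)) (fun x => u2 x - (a * p1d2 x + s * b * p2d2 x)))
    by (eapply DD_ext; [dd | intros; cbv beta; ring]).
  assert (G3 : DD (fun x => u2 x - (a * p1d2 x + s * b * p2d2 x)) (fun x => u3 x - (a * p1d3 x + s * b * p2d3 x)))
    by (eapply DD_ext; [dd | intros; cbv beta; ring]).
  assert (H1 : DD (fun x => v x - (b * phi1 x - s * a * phi2 x)) (fun x => v1 x - (b * p1d1 x - s * a * p2d1 x)))
    by (eapply DD_ext; [dd | intros; cbv beta; ring]).
  assert (H2 : DD (fun x => v1 x - (b * p1d1 x - s * a * p2d1 x)) (fun x => v2 x - (b * p1d2 x - s * a * p2d2 x)))
    by (eapply DD_ext; [dd | intros; cbv beta; ring]).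
  assert (H3 : DD (fun x => v2 x - (b * p1d2 x - s * a * p2d2 x)) (fun x => v3 x - (b * p1d3 x - s * a * p2d3 x)))
    by (eapply DD_ext; [dd | intros; cbv beta; ring]).
  assert (HO : forall x, 0 <= x <= Lc ->
    - (u1 x - (a * p1d1 x + s * b * p2d1 x)) - (u3 x - (a * p1d3 x + s * b * p2d3 x)) =
       0 * (u x - (a * phi1 x + s * b * phi2 x)) - w * (v x - (b * phi1 x - s * a * phi2 x)) /\
    - (v1 x - (b * p1d1 x - s * a * p2d1 x)) - (v3 x - (b * p1d3 x - s * a * p2d3 x)) =
       0 * (v x - (b * phi1 x - s * a * phi2 x)) + w * (u x - (a * phi1 x + s * b * phi2 x))).
  { intros x Hx. destruct (Hode x Hx) as [O1 O2].
    replace (u3 x) with (- u1 x + w * v x) by lra.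
    replace (v3 x) with (- v1 x - w * u x) by lra.
    replace (p1d3 x) with (- q * phi2 x - p1d1 x) by (rewrite <- ode1; ring).
    replace (p2d3 x) with (q * phi1 x - p2d1 x) by (rewrite <- ode2; ring).
    unfold w. split.
    - apply Rminus_diag_uniq. transitivity ((s * s - 1) * (q * a * phi2 x)). ring. rewrite Hs2. ring.
    - apply Rminus_diag_uniq. transitivity ((s * s - 1) * (q * b * phi2 x)). ring. rewrite Hs2. ring. }
  intros x Hx.
  destruct (uniq w _ _ _ _ _ _ _ _ G1 G2 G3 H1 H2 H3 HO) with (x := x) as [Z1 Z2]; auto.
  - cbv beta. rewrite Hu0, V1, V2. ring.
  - cbv beta. rewrite Hu10, V3, V4. ring.
  - cbv beta. rewrite V5, V6. unfold a. field. auto.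
  - cbv beta. rewrite Hv0, V1, V2. ring.
  - cbv beta. rewrite Hv10, V3, V4. ring.
  - cbv beta. rewrite V5, V6. unfold b. field. auto.
  - split; lra.
Qed.

Theorem lemma2p3 :
  (forall w : R, is_eigenvalue 0 w <-> (w = q \/ w = - q)) /\
  (forall s : R, (s = 1 \/ s = -1) ->
     forall u v : R -> R,
       eigen_eq 0 (s * q) u v <->
       exists a b : R, forall x, 0 <= x <= Lc ->
         u x = a * phi1 x + s * b * phi2 x /\
         v x = b * phi1 x - s * a * phi2 x).
Proof.
  split.
  - intros w. split. apply part1_dir.
    intros Hw. exists phi1.
    assert (Hs : exists s, (s = 1 \/ s = -1) /\ w = s * q) by
      (destruct Hw as [->| ->]; [exists 1 | exists (-1)]; split; auto; ring).
    destruct Hs as [s [Hs ->]].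
    exists (fun x => 0 * phi1 x - s * 1 * phi2 x). split.
    + apply (part2_back s Hs _ _ 1 0). intros x _. split; ring.
    + exists (Lc / 2). pose proof Lc_pos. split. lra. left. rewrite valmid. pose proof Theta_pos. lra.
  - intros s Hs u v. split. apply part2_fwd; auto.
    intros [a [b H]]. eapply part2_back; eauto.
Qed.
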